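(* Let $k\geq2$ be an integer and let $(f(n))_{n\geq0}$ be a $k$-regular sequence over a field $\mathcal{S}\subseteq\mathbb{A}$ (the real algebraic numbers), with matrices $F_0,\dots,F_{k-1}$ of a minimal linear representation of it. Set $F(n)=F_{n_0}\cdots F_{n_{s-1}}$ for $(n)_k=n_{s-1}\cdots n_0$. Let $\sigma\in\mathbb{R}$, $\ell\in\mathbb{N}_0$, and $h(n)=n^\sigma(\log n)^\ell$. Then $f(n)\in O(h(n))$ if and only if $F(n)\in O(h(n))$. In particular, $(f(n))_{n\geq0}$ and $(F(n))_{n\geq0}$ have exactly the same growth rate.
   Context: For $n\in\mathbb{N}_0$, $(n)_k=n_{s-1}\cdots n_0$ is the standard base-$k$ representation of $n$ (no leading zeros; $(0)_k$ empty). A linear representation of $(f(n))_{n\geq0}$ consists of $r\geq0$, a $1\times r$ row vector $\lambda$, an $r\times1$ column vector $\gamma$ and $r\times r$ matrices $F_0,\dots,F_{k-1}$ over $\mathcal{S}$ with $f(n)=\lambda F_{n_0}\cdots F_{n_{s-1}}\gamma$ for all $n$; $f$ is $k$-regular if it has one, and the representation is minimal if $r$ is smallest possible for $f$. $f(n)\in O(g(n))$ means there exist $n_0$, $c>0$ with $|f(n)|\leq c\,g(n)$ for $n\geq n_0$; a sequence of matrices is in $O(g(n))$ if each entry sequence (fixed row and column) is, equivalently if the sequence of norms is. A sequence has exact growth $n^\sigma(\log n)^\ell$ if it is in $O(n^\sigma(\log n)^\ell)$ but not in $O(n^{\sigma'}(\log n)^{\ell'})$ for any $\sigma'\in\mathbb{R},\ell'\in\mathbb{N}_0$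 with $(\sigma',\ell')$ lexicographically smaller than $(\sigma,\ell)$. *)

(* Defs.v *)
From HB Require Import structures.
From mathcomp Require Import all_boot all_order all_algebra.
From mathcomp Require Import all_classical all_reals all_analysis.
Set Implicit Arguments. Unset Strict Implicit. Unset Printing Implicit Defensive.
Import Order.TTheory GRing.Theory Num.Theory.
Local Open Scope ring_scope.

Section Defs.
Variable R : realType.

Definition algebraic (x : R) : Prop :=
  exists p : {poly rat}, p != 0 /\ root (map_poly ratr p) x.

Definition is_subfield (S : pred R) : Prop :=
  [/\ 0 \in S, 1 \in S,
      (forall x y, x \in S -> y \in S -> x - y \in S),
      (forall x y, x \in S -> y \in S -> x * y \in S) &
      (forall x, x \in S -> x != 0 -> x^-1 \in S)].

Definition subfield_of_real_algebraic (S : pred R) : Prop :=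
  is_subfield S /\ forall x, x \in S -> algebraic x.

(* base-k digits of n, least significant first: (n)_k = n_{s-1}...n_0 is
   returned as [:: n_0; ...; n_{s-1}]; empty for n = 0 *)
Fixpoint digits_aux (fuel k n : nat) : seq nat :=
  match fuel with
  | 0 => [::]
  | fuel'.+1 => if n == 0%N then [::] else (n %% k)%N :: digits_aux fuel' k (n %/ k)
  end.
Definition digits (k n : nat) : seq nat := digits_aux n k n.

Definition Fmat (r : nat) (Fs : nat -> 'M[R]_r) (k n : nat) : 'M[R]_r :=
  foldr (fun d M => Fs d *m M) 1%:M (digits k n).

Definition is_linrep (S : pred R) (k : nat) (f : nat -> R) (r : nat)
  (lam : 'rV[R]_r) (gam : 'cV[R]_r) (Fs : nat -> 'M[R]_r) : Prop :=
  [/\ (forall j, lam 0 j \in S), (forall i, gam i 0 \in S),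
      (forall d, (d < k)%N -> forall i j, Fs d i j \in S) &
      (forall n, f n = (lam *m Fmat Fs k n *m gam) 0 0)].

Definition is_k_regular (S : pred R) (k : nat) (f : nat -> R) : Prop :=
  exists r lam gam Fs, @is_linrep S k f r lam gam Fs.

Definition is_minimal_linrep (S : pred R) (k : nat) (f : nat -> R) (r : nat)
  (lam : 'rV[R]_r) (gam : 'cV[R]_r) (Fs : nat -> 'M[R]_r) : Prop :=
  is_linrep S k f lam gam Fs /\
  forall r' (lam' : 'rV[R]_r') gam' Fs', is_linrep S k f lam' gam' Fs' -> (r <= r')%N.

Definition hfun (sigma : R) (ell : nat) (n : nat) : R :=
  (n%:R `^ sigma) * (ln (n%:R)) ^+ ell.

Definition inO (g h : nat -> R) : Prop :=
  exists n0 : nat, exists c : R, 0 < c /\ forall n, (n0 <= n)%N -> `|g n| <= c * h n.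

Definition inO_mx (m p : nat) (G : nat -> 'M[R]_(m, p)) (h : nat -> R) : Prop :=
  forall i j, inO (fun n => G n i j) h.

Definition exact_growth (O : (nat -> R) -> Prop) (sigma : R) (ell : nat) : Prop :=
  O (hfun sigma ell) /\
  forall (sigma' : R) (ell' : nat),
    (sigma' < sigma \/ (sigma' = sigma /\ (ell' < ell)%N)) -> ~ O (hfun sigma' ell').

End Defs.

(* Main.v *)
Require Import Defs.
From HB Require Import structures.
From mathcomp Require Import all_boot all_order all_algebra.
From mathcomp Require Import all_classical all_reals all_analysis.
Import Order.TTheory GRing.Theory Num.Theory.
Set Implicit Arguments. Unset Strict Implicit. Unset Printing Implicit Defensive.
Local Open Scope ring_scope.

Section SF.
Variable R : realType.
Variable S : pred R.
Hypothesis HS : is_subfield S.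

Lemma S0 : 0 \in S. Proof. by case: HS. Qed.
Lemma S1 : 1 \in S. Proof. by case: HS. Qed.
Lemma SB x y : x \in S -> y \in S -> x - y \in S. Proof. by case: HS => _ _ H _ _; apply: H. Qed.
Lemma SM x y : x \in S -> y \in S -> x * y \in S. Proof. by case: HS => _ _ _ H _; apply: H. Qed.
Lemma SV x : x \in S -> x^-1 \in S.
Proof.
case: HS => _ _ _ _ H xS; have [->|nz] := eqVneq x 0; first by rewrite invr0 S0.
exact: H.
Qed.
Lemma SN x : x \in S -> - x \in S. Proof. by move=> xS; rewrite -sub0r; apply: SB => //; apply: S0. Qed.
Lemma SD x y : x \in S -> y \in S -> x + y \in S.
Proof. by move=> xS yS; rewrite -[y]opprK; apply: SB => //; apply: SN. Qed.
Lemma Ssum (I : Type) (r : seq I) (P : pred I) (F : I -> R) :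
  (forall i, P i -> F i \in S) -> \sum_(i <- r | P i) F i \in S.
Proof. move=> H; apply: (big_ind (fun x => x \in S)) => //; [exact: S0 | exact: SD]. Qed.
Lemma Sprod (I : Type) (r : seq I) (P : pred I) (F : I -> R) :
  (forall i, P i -> F i \in S) -> \prod_(i <- r | P i) F i \in S.
Proof. move=> H; apply: (big_ind (fun x => x \in S)) => //; [exact: S1 | exact: SM]. Qed.
Lemma SX x n : x \in S -> x ^+ n \in S.
Proof. move=> xS; elim: n => [|n IH]; first by rewrite expr0 S1. by rewrite exprS SM. Qed.
Lemma Snat n : (n%:R : R) \in S.
Proof. elim: n => [|n IH]; first exact: S0. by rewrite -addn1 natrD SD // S1. Qed.

Definition mxS m n (A : 'M[R]_(m, n)) := forall i j, A i j \in S.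

Lemma Sdet n (A : 'M[R]_n) : mxS A -> \det A \in S.
Proof.
move=> HA; rewrite /determinant; apply: Ssum => s _.
apply: SM; first by apply: SX; apply: SN; apply: S1.
by apply: Sprod => i _; apply: HA.
Qed.
Lemma Smul m n p (A : 'M[R]_(m, n)) (B : 'M[R]_(n, p)) : mxS A -> mxS B -> mxS (A *m B).
Proof. by move=> HA HB i j; rewrite mxE; apply: Ssum => l _; apply: SM. Qed.
Lemma Str m n (A : 'M[R]_(m, n)) : mxS A -> mxS A^T.
Proof. by move=> HA i j; rewrite mxE. Qed.
Lemma S1mx n : mxS (1%:M : 'M[R]_n).
Proof. by move=> i j; rewrite mxE; case: (i == j); [exact: S1 | exact: S0]. Qed.
Lemma Srowsub m m' n (g : 'I_m' -> 'I_m) (A : 'M[R]_(m, n)) : mxS A -> mxS (rowsub g A).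
Proof. by move=> HA i j; rewrite mxE. Qed.
Lemma Sinvmx n (A : 'M[R]_n) : mxS A -> mxS (invmx A).
Proof.
move=> HA i j; rewrite /invmx; case: ifP => _ //.
rewrite mxE; apply: SM; first by apply: SV; apply: Sdet.
rewrite mxE /cofactor; apply: SM; first by apply: SX; apply: SN; apply: S1.
by apply: Sdet => a b; rewrite !mxE.
Qed.
End SF.

From mathcomp Require Import zify.

Section Basis.
Variable R : realType.
Variable S : pred R.
Hypothesis HS : is_subfield S.

Lemma basis_done t r (B : 'M[R]_(t, r)) : row_free B -> mxS S B ->
  exists P : 'M[R]_(r, t), mxS S P /\ B *m P = 1%:M.
Proof.
move=> fB SBm.
have rkA : row_full B^T by rewrite /row_full mxrank_tr.
have U := fullrowsub_unit rkA.
exists ((rowsub (fullrankfun rkA) 1%:M)^T *m invmx (rowsub (fullrankfun rkA) B^T)^T).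
split.
  apply: Smul => //; first by apply: Str; apply: Srowsub; apply: S1mx.
  by apply: Sinvmx => //; apply: Str; apply: Srowsub; apply: Str.
rewrite mulmxA.
have -> : B *m (rowsub (fullrankfun rkA) 1%:M)^T = (rowsub (fullrankfun rkA) B^T)^T.
  by rewrite [in RHS]rowsubE trmx_mul trmxK.
by rewrite mulmxV // unitmx_tr.
Qed.

Lemma basis_lemma r (gen : 'rV[R]_r -> Prop) :
  (forall x, gen x -> mxS S x) ->
  exists s (B : 'M[R]_(s, r)) (P : 'M[R]_(r, s)),
    [/\ forall i, gen (row i B), mxS S P, B *m P = 1%:M & forall x, gen x -> (x <= B)%MS].
Proof.
move=> HgS.
suff H : forall d t (B : 'M[R]_(t, r)), (r - t <= d)%N -> row_free B ->
    (forall i, gen (row i B)) ->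
    exists s (B : 'M[R]_(s, r)) (P : 'M[R]_(r, s)),
    [/\ forall i, gen (row i B), mxS S P, B *m P = 1%:M & forall x, gen x -> (x <= B)%MS].
  apply: (H r 0%N 0) => //; first by rewrite subn0.
    by rewrite /row_free mxrank0.
  by case.
elim=> [|d IH] t B hd fB gB.
all: have SBm : mxS S B by move=> i j; have := HgS _ (gB i) 0 j; rewrite mxE.
all: case: (pselect (forall x, gen x -> (x <= B)%MS)) => [all|nall];
  first by have [P [SP BP]] := basis_done fB SBm; exists t, B, P.
all: case: (pselect (exists x, gen x /\ ~~ (x <= B)%MS)) => [[x [gx nx]]|nex]; last first.
1,3: by exfalso; apply: nall => x gx; apply: contraT => nx; exfalso; apply: nex; by exists x.
all: have rB : \rank B = t by apply/eqP.
all: have lt : (\rank B < \rank (col_mx B x))%N.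
1,3: rewrite -addsmxE; apply: rank_ltmx; rewrite ltmxE addsmxSl /=;
     by apply: contra nx => Hs; apply: submx_trans Hs; apply: addsmxSr.
all: have le : (\rank (col_mx B x) <= t + 1)%N by apply: rank_leq_row.
all: have rB' : \rank (col_mx B x) = (t + 1)%N by move: lt le; rewrite rB; lia.
all: have tr : (t + 1 <= r)%N by rewrite -rB'; apply: rank_leq_col.
  exfalso; move: hd tr; lia.
apply: (IH (t + 1)%N (col_mx B x)).
- move: hd tr; lia.
- by rewrite /row_free rB'.
move=> i; case: (split_ordP i) => j ->.
  have -> : row (lshift 1 j) (col_mx B x) = row j B by apply/rowP => l; rewrite mxE col_mxEu mxE.
  exact: gB.
have -> : row (rshift t j) (col_mx B x) = x by apply/rowP => l; rewrite mxE col_mxEd (ord1 j).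
exact: gx.
Qed.
End Basis.
Section OO.
Variable R : realType.
Variables (sigma : R) (ell : nat).
Local Notation h := (hfun sigma ell).

Lemma hfun_ge0 n : (1 <= n)%N -> 0 <= h n.
Proof.
move=> n1; rewrite /hfun; apply: mulr_ge0; first exact: powR_ge0.
by apply: exprn_ge0; apply: ln_ge0; rewrite ler1n.
Qed.

Lemma inO_ext (g1 g2 : nat -> R) n1 :
  (forall n, (n1 <= n)%N -> g1 n = g2 n) -> inO g1 h -> inO g2 h.
Proof.
move=> E [n0 [c [c0 H]]]; exists (maxn n0 n1), c; split => // n.
rewrite geq_max => /andP[a b]; rewrite -E //; exact: H.
Qed.

Lemma inO_zero : inO (fun _ => 0) h.
Proof.
exists 1%N, 1; split => // n n1; rewrite normr0 mul1r; exact: hfun_ge0.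
Qed.

Lemma inO_add (g1 g2 : nat -> R) : inO g1 h -> inO g2 h -> inO (fun n => g1 n + g2 n) h.
Proof.
move=> [n1 [c1 [c10 H1]]] [n2 [c2 [c20 H2]]]; exists (maxn n1 n2), (c1 + c2).
split; first exact: addr_gt0.
move=> n; rewrite geq_max => /andP[a b].
apply: (le_trans (ler_normD _ _)); rewrite mulrDl; apply: lerD; [exact: H1|exact: H2].
Qed.

Lemma inO_scale (g : nat -> R) a : inO g h -> inO (fun n => a * g n) h.
Proof.
move=> [n1 [c [c0 H]]]; exists n1, ((`|a| + 1) * c); split.
  by apply: mulr_gt0 => //; apply: ltr_wpDl.
move=> n nn; have := H n nn => Hn.
have hc : 0 <= c * h n by apply: le_trans Hn.
rewrite normrM -mulrA; apply: (le_trans (ler_wpM2l (normr_ge0 a) Hn)).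
by apply: ler_wpM2r => //; rewrite lerDl.
Qed.

Lemma inO_sum (I : Type) (r : seq I) (P : pred I) (F : I -> nat -> R) :
  (forall i, inO (F i) h) -> inO (fun n => \sum_(i <- r | P i) F i n) h.
Proof.
move=> H; elim: r => [|a r IH].
  by apply: (inO_ext (n1 := 0)) inO_zero => n _; rewrite big_nil.
case Pa: (P a).
  apply: (inO_ext (n1 := 0)) (inO_add (H a) IH) => n _; by rewrite big_cons Pa.
by apply: (inO_ext (n1 := 0)) IH => n _; rewrite big_cons Pa.
Qed.

Lemma inO_bilin m p (G : nat -> 'M[R]_(m, p)) (u : 'rV[R]_m) (v : 'cV[R]_p) :
  inO_mx G h -> inO (fun n => (u *m G n *m v) 0 0) h.
Proof.
move=> H.
apply: (inO_ext (n1 := 0) (g1 := fun n => \sum_(j < p) \sum_(i < m) (v j 0 * (u 0 i * G n i j)))).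
  move=> n _; rewrite mxE; apply: eq_bigr => j _; rewrite mxE big_distrl /=.
  by apply: eq_bigr => i _; rewrite mulrC.
apply: inO_sum => j; apply: inO_sum => i; apply: inO_scale; apply: inO_scale; exact: H.
Qed.

Lemma hfun_comp (N : nat -> nat) (C : nat) :
  (forall n, (1 <= n)%N -> (n <= N n <= C * n)%N) ->
  exists n1 K, 0 < K /\ forall n, (n1 <= n)%N -> h (N n) <= K * h n.
Proof.
move=> HN; have C1 : (1 <= C)%N.
  by have /andP[a b] := HN 1%N isT; rewrite muln1 in b; apply: leq_trans b.
exists (maxn 1 C), ((C%:R : R) `^ `|sigma| * 2 ^+ ell); split.
  apply: mulr_gt0; last by apply: exprn_gt0.
  by rewrite powR_gt0 // ltr0n.
move=> n; rewrite geq_max => /andP[n1 nC].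
have /andP[Nl Nu] := HN n n1.
have n0 : (0 < n%:R :> R) by rewrite ltr0n.
set x : R := (N n)%:R / n%:R.
have x1 : 1 <= x by rewrite /x ler_pdivlMr // mul1r ler_nat.
have xC : x <= C%:R by rewrite /x ler_pdivrMr // -natrM ler_nat.
have Ne : (N n)%:R = x * n%:R :> R by rewrite /x divfK // gt_eqF.
rewrite /hfun Ne powRM //; last by apply: le_trans x1.
rewrite mulrACA; apply: ler_pM.
- apply: mulr_ge0; exact: powR_ge0.
- apply: exprn_ge0; apply: ln_ge0; rewrite -[X in X <= _]mulr1; apply: ler_pM => //; by rewrite ler1n.
- apply: ler_wpM2r; first exact: powR_ge0.
  apply: (@le_trans _ _ (x `^ `|sigma|)).
    apply: ler_powR => //; exact: ler_norm.
  apply: ge0_ler_powR => //; rewrite ?nnegrE //; by apply: le_trans x1.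
- rewrite -exprMn; apply: lerXn2r.
  + rewrite nnegrE; apply: ln_ge0; rewrite -[X in X <= _]mulr1; apply: ler_pM => //; by rewrite ler1n.
  + rewrite nnegrE mulr_ge0 //; apply: ln_ge0; by rewrite ler1n.
  + have xp : 0 < x by apply: lt_le_trans x1.
    rewrite lnM ?posrE // mulr2n mulrDl mul1r lerD2r.
    apply: (le_trans (y := ln (C%:R))).
      rewrite ler_ln ?posrE //; by apply: lt_le_trans xC.
    rewrite ler_ln ?posrE ?ltr0n //; by rewrite ler_nat.
Qed.

Lemma inO_comp (g : nat -> R) (N : nat -> nat) (C : nat) :
  (forall n, (1 <= n)%N -> (n <= N n <= C * n)%N) ->
  inO g h -> inO (fun n => g (N n)) h.
Proof.
move=> HN [n0 [c [c0 H]]]; have [n1 [K [K0 HK]]] := hfun_comp HN.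
exists (maxn (maxn n0 n1) 1), (c * K); split; first exact: mulr_gt0.
move=> n; rewrite !geq_max => /andP[/andP[a b] d].
have /andP[Nl _] := HN n d.
apply: (le_trans (H _ (leq_trans a Nl))); rewrite -mulrA; apply: ler_wpM2l.
  exact: ltW.
exact: HK.
Qed.
End OO.
Section Dig.
Variable k : nat.
Hypothesis k2 : (2 <= k)%N.

Lemma digits_aux_fuel f1 f2 n : (n <= f1)%N -> (n <= f2)%N ->
  digits_aux f1 k n = digits_aux f2 k n.
Proof.
elim: f1 f2 n => [|f1 IH] [|f2] n /=.
- by [].
- by rewrite leqn0 => /eqP ->.
- by move=> _; rewrite leqn0 => /eqP ->.
case: eqP => // /eqP n0 h1 h2; congr (_ :: _); apply: IH.
  by rewrite -ltnS; apply: leq_trans h1; apply: ltn_Pdiv; rewrite ?lt0n.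
by rewrite -ltnS; apply: leq_trans h2; apply: ltn_Pdiv; rewrite ?lt0n.
Qed.

Lemma digits0 : digits k 0 = [::]. Proof. by []. Qed.

Lemma digits_cons n : (0 < n)%N -> digits k n = (n %% k)%N :: digits k (n %/ k).
Proof.
case: n => // n _; rewrite /digits /=; congr (_ :: _).
apply: digits_aux_fuel => //.
by rewrite -ltnS; apply: ltn_Pdiv.
Qed.

Lemma digits_lt n : all (fun d => d < k)%N (digits k n).
Proof.
elim/ltn_ind: n => n IH; case: n IH => // n IH.
rewrite digits_cons //= ltn_mod (leq_trans _ k2) //=; apply: IH.
by apply: ltn_Pdiv.
Qed.

Definition valw (w : seq nat) : nat := foldr (fun d acc => d + k * acc)%N 0%N w.

Lemma digits_dcons d m : (d < k)%N -> (0 < d + k * m)%N ->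
  digits k (d + k * m) = d :: digits k m.
Proof.
move=> dk p; rewrite digits_cons //; have k0 : (0 < k)%N by apply: leq_trans k2.
by rewrite addnC mulnC modnMDl divnMDl // modn_small // divn_small // addn0.
Qed.

Lemma digits_cat u M : all (fun d => d < k)%N u -> (0 < M)%N ->
  digits k (valw u + k ^ size u * M) = u ++ digits k M.
Proof.
have k0 : (0 < k)%N by apply: leq_trans k2.
elim: u => [|d u IH] /=; first by rewrite mul1n add0n.
case/andP=> dk au M0.
have -> : (d + k * valw u + k ^ (size u).+1 * M = d + k * (valw u + k ^ size u * M))%N.
  by rewrite expnS mulnDr addnA mulnA.
rewrite digits_dcons //; first by rewrite IH.
by rewrite addn_gt0 muln_gt0 k0 addn_gt0 muln_gt0 expn_gt0 k0 M0 !orbT.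
Qed.

Lemma valw_digits n : valw (digits k n) = n.
Proof.
elim/ltn_ind: n => n IH; case: n IH => // n IH.
rewrite digits_cons //= IH; last by apply: ltn_Pdiv.
by rewrite mulnC addnC -divn_eq.
Qed.

Lemma valw_lt u : all (fun d => d < k)%N u -> (valw u < k ^ size u)%N.
Proof.
elim: u => [|d u IH] //= /andP[dk au].
rewrite expnS; have := IH au => H.
apply: (@leq_trans (k + k * valw u)); first by rewrite ltn_add2r.
by rewrite -mulnS leq_mul2l H orbT.
Qed.

Lemma size_digits_bound n : (0 < n)%N -> (k ^ size (digits k n) <= k * n)%N.
Proof.
elim/ltn_ind: n => n IH n0; rewrite digits_cons //= expnS leq_mul2l.
have [q0|qp] := posnP (n %/ k).
  by rewrite q0 /= expn0 n0 orbT.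
apply/orP; right; apply: (leq_trans (IH _ _ qp)); first by apply: ltn_Pdiv.
by rewrite mulnC leq_trunc_div.
Qed.
End Dig.

Section Fw.
Variable R : realType.
Variable r : nat.
Variable Fs : nat -> 'M[R]_r.
Definition Fw (w : seq nat) : 'M[R]_r := foldr (fun d M => Fs d *m M) 1%:M w.
Lemma FmatE k n : Fmat Fs k n = Fw (digits k n). Proof. by []. Qed.
Lemma Fw_cat u v : Fw (u ++ v) = Fw u *m Fw v.
Proof. elim: u => [|d u IH] /=; first by rewrite mul1mx. by rewrite IH mulmxA. Qed.
End Fw.

Lemma entryE (R : realType) m n (A : 'M[R]_(m, n)) i j :
  A i j = ((delta_mx 0 i : 'rV[R]_m) *m A *m (delta_mx j 0 : 'cV[R]_n)) 0 0.
Proof. by rewrite -rowE -colE !mxE. Qed.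

Lemma bilin_expand (R : realType) m p (u : 'rV[R]_m) (M : 'M[R]_(m, p)) (v : 'cV[R]_p) :
  (u *m M *m v) 0 0 = \sum_(b < p) \sum_(a < m) (u 0 a * M a b * v b 0).
Proof.
rewrite mxE; apply: eq_bigr => b _; rewrite mxE big_distrl /=.
by apply: eq_bigr => a _.
Qed.

Section Main.
Variable R : realType.
Variable S : pred R.
Hypothesis HS : is_subfield S.
Variable k : nat.
Hypothesis k2 : (2 <= k)%N.
Variable f : nat -> R.
Variable r : nat.
Variables (lam : 'rV[R]_r) (gam : 'cV[R]_r) (Fs : nat -> 'M[R]_r).
Hypothesis Hrep : is_linrep S k f lam gam Fs.

Let Slam : mxS S lam. Proof. by case: Hrep => H _ _ _ i j; rewrite (ord1 i). Qed.
Let Sgam : mxS S gam. Proof. by case: Hrep => _ H _ _ i j; rewrite (ord1 j). Qed.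
Let SF d : (d < k)%N -> mxS S (Fs d). Proof. by case: Hrep => _ _ H _; apply: H. Qed.
Let fE n : f n = (lam *m Fmat Fs k n *m gam) 0 0. Proof. by case: Hrep => _ _ _ H. Qed.

Lemma SFw w : all (fun d => d < k)%N w -> mxS S (Fw Fs w).
Proof.
elim: w => [|d w IH] /=; first by move=> _; apply: S1mx.
by case/andP=> dk aw; apply: Smul => //; [apply: SF | apply: IH].
Qed.

Lemma row_reduce s (B : 'M[R]_(s, r)) (P : 'M[R]_(r, s)) :
  mxS S B -> mxS S P -> B *m P = 1%:M ->
  (forall w, all (fun d => d < k)%N w -> (lam *m Fw Fs w <= B)%MS) ->
  is_linrep S k f (lam *m P) (B *m gam) (fun d => B *m Fs d *m P).
Proof.
move=> SBm SP BP Hsub.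
have xPB x : (x <= B)%MS -> x *m P *m B = x.
  by case/submxP=> D ->; rewrite -[D *m B *m P]mulmxA BP mulmx1.
have key w x : (forall w', all (fun d => d < k)%N w' -> (x *m Fw Fs w' <= B)%MS) ->
    all (fun d => d < k)%N w ->
    x *m P *m Fw (fun d => B *m Fs d *m P) w = x *m Fw Fs w *m P.
  elim: w x => [|d w IH] x Hx /=; first by rewrite !mulmx1.
  case/andP=> dk aw.
  have xB : (x <= B)%MS by have := Hx [::] isT; rewrite /= mulmx1.
  rewrite !mulmxA xPB //; apply: IH => // w' aw'.
  by rewrite -mulmxA; apply: (Hx (d :: w')); rewrite /= dk.
split.
- by move=> j; apply: Smul.
- by move=> i; apply: Smul.
- by move=> d dk i j; apply: Smul => //; apply: Smul => //; apply: SF.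
move=> n; rewrite fE !FmatE.
rewrite (key _ _ lam); [|exact: Hsub|exact: digits_lt].
by rewrite mulmxA xPB //; apply: Hsub; apply: digits_lt.
Qed.

Lemma col_reduce s (C : 'M[R]_(r, s)) (Q : 'M[R]_(s, r)) :
  mxS S C -> mxS S Q -> Q *m C = 1%:M ->
  (forall m, exists c : 'cV[R]_s, Fmat Fs k m *m gam = C *m c) ->
  is_linrep S k f (lam *m C) (Q *m gam) (fun d => Q *m Fs d *m C).
Proof.
move=> SC SQ QC Hc.
have CQ y : (exists c, y = C *m c) -> C *m (Q *m y) = y.
  by case=> c ->; rewrite [Q *m _]mulmxA QC mul1mx.
have key m : Fmat (fun d => Q *m Fs d *m C) k m *m (Q *m gam) = Q *m (Fmat Fs k m *m gam).
  elim/ltn_ind: m => m IH; case: m IH => [|m] IH.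
    by rewrite !FmatE digits0 /= !mul1mx.
  rewrite !FmatE digits_cons //= -!FmatE.
  rewrite -mulmxA IH; last by apply: ltn_Pdiv.
  rewrite -!mulmxA CQ; last exact: Hc.
  by rewrite !mulmxA.
split.
- by move=> j; apply: Smul.
- by move=> i; apply: Smul.
- by move=> d dk i j; apply: Smul => //; apply: Smul => //; apply: SF.
move=> n; rewrite fE -!mulmxA key CQ //; exact: Hc.
Qed.

Lemma easy_dir (sigma : R) (ell : nat) :
  inO_mx (Fmat Fs k) (hfun sigma ell) -> inO f (hfun sigma ell).
Proof.
move=> H; apply: (inO_ext (n1 := 0)) (inO_bilin lam gam H) => n _; by rewrite fE.
Qed.

Hypothesis Hmin : forall r' (lam' : 'rV[R]_r') gam' Fs', is_linrep S k f lam' gam' Fs' -> (r <= r')%N.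

Lemma hard_dir (sigma : R) (ell : nat) :
  inO f (hfun sigma ell) -> inO_mx (Fmat Fs k) (hfun sigma ell).
Proof.
move=> Hf.
have G1 : forall x : 'rV[R]_r, (exists w, all (fun d => d < k)%N w /\ x = lam *m Fw Fs w) -> mxS S x.
  by move=> x [w [aw ->]]; exact: (Smul HS Slam (SFw aw)).
have G2 : forall x : 'rV[R]_r, (exists m, x = (Fmat Fs k m *m gam)^T) -> mxS S x.
  by move=> x [m ->]; apply: Str; apply: (Smul HS _ Sgam); apply: SFw; apply: digits_lt.
have [s1 [B [P [gB SP BP subB]]]] := basis_lemma HS G1.
have [s2 [B' [P' [gB' SP' BP' subB']]]] := basis_lemma HS G2.
have SBm : mxS S B by move=> i j; have := G1 _ (gB i) 0 j; rewrite mxE.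
have SBm' : mxS S B' by move=> i j; have := G2 _ (gB' i) 0 j; rewrite mxE.
have e1 : s1 = r.
  apply/eqP; rewrite eqn_leq; apply/andP; split.
    apply: leq_trans (rank_leq_col B); apply: (mulmx1_min_rank (M := 1%:M) (N := P)).
    by rewrite mul1mx.
  apply: Hmin (row_reduce SBm SP BP _) => w aw; apply: subB; by exists w.
have e2 : s2 = r.
  apply/eqP; rewrite eqn_leq; apply/andP; split.
    apply: leq_trans (rank_leq_col B'); apply: (mulmx1_min_rank (M := 1%:M) (N := P')).
    by rewrite mul1mx.
  apply: (Hmin (col_reduce (C := B'^T) (Q := P'^T) _ _ _ _)).
  - exact: Str.
  - exact: Str.
  - by rewrite -trmx_mul BP' trmx1.
  move=> m; have /submxP [D HD] : ((Fmat Fs k m *m gam)^T <= B')%MS by apply: subB'; exists m.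
  by exists D^T; rewrite -trmx_mul -HD trmxK.
subst s1 s2.
have PB : P *m B = 1%:M by apply: mulmx1C.
have PB' : P' *m B' = 1%:M by apply: mulmx1C.
move=> i j.
pose u : 'rV[R]_r := delta_mx 0 i *m P.
pose v : 'cV[R]_r := (delta_mx 0 j *m P')^T.
have E n : Fmat Fs k n i j = \sum_(b < r) \sum_(a < r)
    (u 0 a * (row a B *m Fmat Fs k n *m (row b B')^T) 0 0 * v b 0).
  rewrite entryE.
  have -> : delta_mx 0 i = u *m B by rewrite /u -mulmxA PB mulmx1.
  have -> : delta_mx j 0 = B'^T *m v :> 'cV[R]_r.
    by rewrite /v -trmx_mul -mulmxA PB' mulmx1 trmx_delta.
  rewrite !mulmxA -(mulmxA u) -(mulmxA u) bilin_expand.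
  apply: eq_bigr => b _; apply: eq_bigr => a _; congr (_ * _ * _).
  rewrite entryE !rowE !mulmxA; congr (_ 0 0).
  by rewrite -!mulmxA trmx_mul trmx_delta.
apply: (inO_ext (n1 := 0)) => [n _|]; first by rewrite E.
apply: inO_sum => b; apply: inO_sum => a.
apply: (inO_ext (n1 := 0) (g1 := fun n => v b 0 * (u 0 a * (row a B *m Fmat Fs k n *m (row b B')^T) 0 0))).
  by move=> n _; rewrite mulrC.
apply: inO_scale; apply: inO_scale.
have [w [aw ->]] := gB a; have [m ->] := gB' b; rewrite trmxK.
set N := fun n => (valw k w + k ^ size w * (n + k ^ size (digits k n) * m))%N.
apply: (inO_ext (n1 := 1) (g1 := fun n => f (N n))).
  move=> n n1; rewrite fE FmatE.
  have -> : digits k (N n) = w ++ (digits k n ++ digits k m).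
    rewrite /N digits_cat //; last by rewrite addn_gt0 n1.
    congr (_ ++ _); have [->|m0] := posnP m; first by rewrite muln0 addn0 cats0.
    by rewrite -{1}(valw_digits k2 n) digits_cat //; apply: digits_lt.
  by rewrite !Fw_cat !mulmxA.
apply: (inO_comp (C := (k ^ size w * (2 + k * m))%N)) Hf.
move=> n n1; rewrite /N.
have K1 : (1 <= k ^ size w)%N by rewrite expn_gt0 (ltnW k2).
have V : (valw k w < k ^ size w)%N by apply: valw_lt.
have D := size_digits_bound k2 n1.
set K := (k ^ size w)%N; set Dn := (k ^ size (digits k n))%N; set Vw := valw k w.
have h1 : (Dn * m <= k * n * m)%N by apply: leq_mul.
have h2 : (K * (n + Dn * m) <= K * (n + k * n * m))%N by rewrite leq_mul2l leq_add2l h1 orbT.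
have h3 : (Vw <= K * n)%N by apply: leq_trans (ltnW V) _; apply: leq_pmulr.
have h4 : (n <= K * (n + Dn * m))%N by apply: leq_trans (leq_pmull _ K1); apply: leq_addr.
apply/andP; split; first by apply: leq_trans h4 (leq_addl _ _).
nia.
Qed.

Lemma main_iff (sigma : R) (ell : nat) :
  inO f (hfun sigma ell) <-> inO_mx (Fmat Fs k) (hfun sigma ell).
Proof. split; [exact: hard_dir | exact: easy_dir]. Qed.
End Main.

Unset Implicit Arguments.

Theorem proposition3p9 (R : realType) (S : pred R) (k : nat) (f : nat -> R)
  (r : nat) (lam : 'rV[R]_r) (gam : 'cV[R]_r) (Fs : nat -> 'M[R]_r)
  (sigma : R) (ell : nat) :
  (2 <= k)%N ->
  subfield_of_real_algebraic S ->
  is_k_regular S k f ->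
  is_minimal_linrep S k f lam gam Fs ->
  (inO f (hfun sigma ell) <-> inO_mx (Fmat Fs k) (hfun sigma ell)) /\
  (exact_growth (inO f) sigma ell <->
   exact_growth (fun h => inO_mx (Fmat Fs k) h) sigma ell).
Proof.
move=> k2 [HS _] _ [Hrep Hmin].
have M := main_iff HS k2 Hrep Hmin.
split; first exact: M.
split.
  case=> H1 H2; split; first by apply/M.
  by move=> s' l' c Hc; apply: (H2 s' l' c); apply/M.
case=> H1 H2; split; first by apply/M.
by move=> s' l' c Hc; apply: (H2 s' l' c); apply/M.
Qed.
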